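(* Let $m\geq 2$ be an integer, $(t_j)_{j=0}^{\infty}$ the $TM_m$ sequence and $\mathbf{t}=t_0t_1t_2\ldots$. Then for every positive integer $n$, $p_{\mathbf{t}}(n)\leq m^3 n$.
   Context: For an integer $m\geq 2$, the $TM_m$ sequence $(t_n)_{n=0}^{\infty}$ is defined by: if $n=\sum_{j=0}^{k}c_j m^j$ is the base-$m$ expansion of $n\geq 0$ (digits $c_j\in\{0,\ldots,m-1\}$), then $t_n:=\sum_{j=0}^{k}c_j \bmod m$. For an infinite word $\mathbf{w}$ over a finite alphabet, the complexity function $p_{\mathbf{w}}(n)$ is the number of distinct (contiguous) subwords of $\mathbf{w}$ of length $n$. *)

(* Defs.v *)
From mathcomp Require Import all_boot.
Set Implicit Arguments. Unset Strict Implicit. Unset Printing Implicit Defensive.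

Fixpoint digit_sum_aux (fuel m n : nat) : nat :=
  match fuel with
  | 0 => 0
  | fuel'.+1 => if n is 0 then 0 else n %% m + digit_sum_aux fuel' m (n %/ m)
  end.

Definition digit_sum (m n : nat) : nat := digit_sum_aux n.+1 m n.

Definition TM (m : nat) (n : nat) : nat := digit_sum m n %% m.

Definition subword (w : nat -> nat) (i n : nat) : seq nat := mkseq (fun k => w (i + k)) n.

Definition is_factor (w : nat -> nat) (n : nat) (u : seq nat) : Prop :=
  exists i, u = subword w i n.

(* p_w(n) <= K : every collection of pairwise distinct factors of length n
   has at most K elements, i.e. the number of distinct factors is <= K *)
Definition complexity_le (w : nat -> nat) (n K : nat) : Prop :=
  forall s : seq (seq nat), uniq s -> (forall u, u \in s -> is_factor w n u) -> size s <= K.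

(* Main.v *)
Require Import Defs.
From mathcomp Require Import all_boot zify.

Section S.
Variable m : nat.
Hypothesis hm : 2 <= m.

Lemma aux_stable fuel fuel' n : n < fuel -> n < fuel' ->
  digit_sum_aux fuel m n = digit_sum_aux fuel' m n.
Proof.
elim: fuel fuel' n => [|f IH] [|f'] n //= h1 h2.
case: n h1 h2 => [|n] //= h1 h2; congr (_ + _); apply: IH.
  rewrite ltn_divLR; [nia|lia].
rewrite ltn_divLR; [nia|lia].
Qed.

Lemma ds_eq n : digit_sum m n = if n is 0 then 0 else n %% m + digit_sum m (n %/ m).
Proof.
rewrite /digit_sum; case: n => [|n] //.
have h : digit_sum_aux n.+1 m (n.+1 %/ m) = digit_sum_aux (n.+1 %/ m).+1 m (n.+1 %/ m).
  by apply: aux_stable => //; rewrite ltn_divLR; [nia|lia].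
transitivity (n.+1 %% m + digit_sum_aux n.+1 m (n.+1 %/ m)); first by [].
by rewrite h.
Qed.

Lemma ds_step a d : d < m -> digit_sum m (a * m + d) = d + digit_sum m a.
Proof.
move=> hd; rewrite ds_eq.
case E: (a * m + d) => [|x].
  have -> : a = 0 by nia. have -> : d = 0 by lia. by [].
rewrite -E.
have H1 : (a * m + d) %% m = d by rewrite modnMDl modn_small.
have H2 : (a * m + d) %/ m = a by rewrite divnMDl ?divn_small ?addn0; lia.
by rewrite H1 H2.
Qed.

Lemma ds_add k q r : r < m ^ k -> digit_sum m (q * m ^ k + r) = digit_sum m q + digit_sum m r.
Proof.
elim: k q r => [|k IH] q r hr.
  have -> : r = 0 by rewrite expn0 in hr; lia. by rewrite expn0 muln1 addn0 [digit_sum m 0]ds_eq addn0.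
have hr2 : r %/ m < m ^ k by rewrite ltn_divLR; [rewrite -expnSr|lia].
have E : q * m ^ k.+1 + r = (q * m ^ k + r %/ m) * m + r %% m.
  rewrite {1}(divn_eq r m) expnSr; nia.
rewrite E ds_step ?ltn_pmod //; last lia.
rewrite IH // {3}(divn_eq r m) ds_step ?ltn_pmod //; last lia. lia.
Qed.

Lemma TM_add k q r : r < m ^ k -> TM m (q * m ^ k + r) = (TM m q + TM m r) %% m.
Proof. move=> h; by rewrite /TM ds_add // modnDm. Qed.
End S.

Theorem lemma4p1 (m : nat) (hm : 2 <= m) (n : nat) (hn : 0 < n) :
  complexity_le (TM m) n (m ^ 3 * n).
Proof.
move=> s us hs.
set k := (trunc_log m n).+1.
set L := m ^ k.
have hnL : n < L by apply: trunc_log_ltn.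
have hLm : L <= m * n.
  rewrite /L /k expnS leq_mul2l; apply/orP; right; exact: trunc_logP.
have L0 : 0 < L by lia.
have m0 : 0 < m by lia.
pose f (x : 'I_L * 'I_m * 'I_m) := mkseq (fun j => if x.1.1 + j < L
   then (x.1.2 + TM m (x.1.1 + j)) %% m else (x.2 + TM m (x.1.1 + j - L)) %% m) n.
apply: (@leq_trans (size (image f predT))).
  apply: uniq_leq_size us _ => u /hs [i ->].
  set x : 'I_L * 'I_m * 'I_m := (Ordinal (ltn_pmod i L0), Ordinal (ltn_pmod (TM m (i %/ L)) m0),
     Ordinal (ltn_pmod (TM m (i %/ L).+1) m0)).
  have -> : subword (TM m) i n = f x.
    apply: (@eq_from_nth _ 0); first by rewrite /subword /f !size_mkseq.
    move=> j; rewrite /subword size_mkseq => hj.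
    rewrite /f !nth_mkseq //= /TM.
    case: ifP => hr.
      have -> : i + j = (i %/ L) * m ^ k + (i %% L + j) by rewrite {1}(divn_eq i L); lia.
      by rewrite -/(TM m _) TM_add // modn_mod.
    have -> : i + j = (i %/ L).+1 * m ^ k + (i %% L + j - L).
      have := ltn_pmod i L0; rewrite {1}(divn_eq i L); move: hr; rewrite /L; nia.
    rewrite -/(TM m _) TM_add // ?modn_mod //.
    have := ltn_pmod i L0; move: hr; rewrite /L; lia.
  by apply: image_f.
rewrite size_image card_prod card_prod !card_ord; nia.
Qed.
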